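(* Let $S$ be an orthodox semigroup with an adequate (and hence inverse) transversal $S^0$. Then for all $x,y\in S$, $\overline{xy}=\overline{x}\,\overline{y}$.
   Context: An orthodox semigroup is a regular semigroup whose idempotents form a subsemigroup. For a semigroup $S$, $S^1$ is $S$ with an identity adjoined, $\mathcal{L},\mathcal{R}$ Green's relations. $\mathcal{R}^\ast=\{(a,b):\forall x,y\in S^1,\ xa=ya\iff xb=yb\}$, $\mathcal{L}^\ast=\{(a,b):\forall x,y\in S^1,\ ax=ay\iff bx=by\}$. $S$ is abundant if each $\mathcal{R}^\ast$- and $\mathcal{L}^\ast$-class contains an idempotent (regular semigroups are abundant); adequate if also idempotents commute (then $a^+$, $a^\ast$ are the unique idempotents $\mathcal{R}^\ast$-, resp. $\mathcal{L}^\ast$-related to $a$). An abundant subsemigroup $U$ of abundant $S$ is a $\ast$-subsemigroup if $\mathcal{L}^\ast(U)=\mathcal{L}^\ast(S)\cap(U\times U)$, $\mathcal{R}^\ast(U)=\mathcal{R}^\ast(S)\cap(U\times U)$. An adequate $\ast$-subsemigroup $S^0$ of abundant $S$ is an adequate transversal if each $x\in S$ has a unique $\overline{x}\in S^0$ and idempotents $e,f$ of $S$ with $x=e\overline{x}f$, $e\,\mathcal{L}\,\overline{x}^+$, $f\,\mathcal{R}\,\overline{x}^\ast$. *)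

(* Defs.v *)
Set Implicit Arguments.

Section Semigroups.
Variable T : Type.
Variable mul : T -> T -> T.

Definition associative_op : Prop :=
  forall a b c, mul a (mul b c) = mul (mul a b) c.

Definition idempotent (e : T) : Prop := mul e e = e.

Definition regular : Prop := forall a, exists x, mul (mul a x) a = a.

Definition orthodox : Prop :=
  regular /\ (forall e f, idempotent e -> idempotent f -> idempotent (mul e f)).

(* S^1 : elements of [option T], [None] is the adjoined identity *)
Definition lmul1 (x : option T) (a : T) : T :=
  match x with None => a | Some x => mul x a end.
Definition rmul1 (a : T) (x : option T) : T :=
  match x with None => a | Some x => mul a x end.

Definition in1 (U : T -> Prop) (x : option T) : Prop :=
  match x with None => True | Some x => U x end.

Definition greenL (a b : T) : Prop :=
  exists x y : option T, a = lmul1 x b /\ b = lmul1 y a.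
Definition greenR (a b : T) : Prop :=
  exists x y : option T, a = rmul1 b x /\ b = rmul1 a y.

Definition RstarIn (U : T -> Prop) (a b : T) : Prop :=
  forall x y : option T, in1 U x -> in1 U y ->
    (lmul1 x a = lmul1 y a <-> lmul1 x b = lmul1 y b).
Definition LstarIn (U : T -> Prop) (a b : T) : Prop :=
  forall x y : option T, in1 U x -> in1 U y ->
    (rmul1 a x = rmul1 a y <-> rmul1 b x = rmul1 b y).

Definition whole : T -> Prop := fun _ => True.
Definition Rstar := RstarIn whole.
Definition Lstar := LstarIn whole.

Definition subsemigroup (U : T -> Prop) : Prop :=
  forall a b, U a -> U b -> U (mul a b).

Definition abundantIn (U : T -> Prop) : Prop :=
  forall a, U a ->
    (exists e, U e /\ idempotent e /\ RstarIn U a e) /\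
    (exists f, U f /\ idempotent f /\ LstarIn U a f).

Definition adequateIn (U : T -> Prop) : Prop :=
  abundantIn U /\
  (forall e f, U e -> U f -> idempotent e -> idempotent f -> mul e f = mul f e).

Definition star_subsemigroup (U : T -> Prop) : Prop :=
  subsemigroup U /\ abundantIn U /\
  (forall a b, U a -> U b -> (LstarIn U a b <-> Lstar a b)) /\
  (forall a b, U a -> U b -> (RstarIn U a b <-> Rstar a b)).

(* a^+ : the (unique, in an adequate U) idempotent of U R*-related to a;
   a^* : the idempotent of U L*-related to a *)
Definition is_plus (U : T -> Prop) (a p : T) : Prop :=
  U p /\ idempotent p /\ RstarIn U a p.
Definition is_star (U : T -> Prop) (a q : T) : Prop :=
  U q /\ idempotent q /\ LstarIn U a q.

(* xb is a "bar" of x w.r.t. S0: xb ∈ S0 and x = e xb f with idempotents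
   e, f of S, e L xb^+, f R xb^* *)
Definition decomp (S0 : T -> Prop) (x xb : T) : Prop :=
  S0 xb /\
  exists e f p q, idempotent e /\ idempotent f /\
    is_plus S0 xb p /\ is_star S0 xb q /\
    x = mul (mul e xb) f /\ greenL e p /\ greenR f q.

Definition adequate_transversal (S0 : T -> Prop) : Prop :=
  adequateIn S0 /\ star_subsemigroup S0 /\
  forall x, exists xb, decomp S0 x xb /\ (forall xb', decomp S0 x xb' -> xb' = xb).

End Semigroups.

(* Main.v *)
Require Import Defs.
From Stdlib Require Import Setoid.

Lemma rsU (T : Type) (mul : T -> T -> T) (a p u v : T) :
  Rstar mul a p -> mul u a = mul v a -> mul u p = mul v p.
Proof. intros H E. exact (proj1 (H (Some u) (Some v) I I) E). Qed.
Lemma rsN (T : Type) (mul : T -> T -> T) (a p u : T) :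
  Rstar mul a p -> mul u a = a -> mul u p = p.
Proof. intros H E. exact (proj1 (H (Some u) None I I) E). Qed.
Lemma rsNr (T : Type) (mul : T -> T -> T) (a p u : T) :
  Rstar mul a p -> mul u p = p -> mul u a = a.
Proof. intros H E. exact (proj2 (H (Some u) None I I) E). Qed.
Lemma lsN (T : Type) (mul : T -> T -> T) (a p u : T) :
  Lstar mul a p -> mul a u = a -> mul p u = p.
Proof. intros H E. exact (proj1 (H (Some u) None I I) E). Qed.
Lemma lsNr (T : Type) (mul : T -> T -> T) (a p u : T) :
  Lstar mul a p -> mul p u = p -> mul a u = a.
Proof. intros H E. exact (proj2 (H (Some u) None I I) E). Qed.

Lemma gL (T : Type) (mul : T -> T -> T) (Hassoc : associative_op mul) (e p : T) :
  idempotent mul e -> idempotent mul p -> greenL mul e p ->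
  mul e p = e /\ mul p e = p.
Proof.
  intros He Hp [[x|] [[y|] [E1 E2]]]; simpl in *; split.
  all: try (rewrite E1, <- Hassoc, Hp; reflexivity).
  all: try (rewrite E2, <- Hassoc, He; reflexivity).
  all: try (rewrite E1; exact Hp).
  all: try (rewrite E2; exact He).
Qed.

Lemma gR (T : Type) (mul : T -> T -> T) (Hassoc : associative_op mul) (f q : T) :
  idempotent mul f -> idempotent mul q -> greenR mul f q ->
  mul q f = f /\ mul f q = q.
Proof.
  intros He Hp [[x|] [[y|] [E1 E2]]]; simpl in *; split.
  all: try (rewrite E1, Hassoc, Hp; reflexivity).
  all: try (rewrite E2, Hassoc, He; reflexivity).
  all: try (rewrite E1; exact Hp).
  all: try (rewrite E2; exact He).
Qed.

Lemma ctx (T : Type) (mul : T -> T -> T) (Hassoc : associative_op mul) (u v w : T) :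
  mul u v = w -> forall X, mul u (mul v X) = mul w X.
Proof. intros H X. rewrite Hassoc, H. reflexivity. Qed.

Theorem corollary2p6 (T : Type) (mul : T -> T -> T)
  (Hassoc : associative_op mul) (Horth : orthodox mul)
  (S0 : T -> Prop) (HS0 : adequate_transversal mul S0) :
  forall x y xb yb : T,
    decomp mul S0 x xb -> decomp mul S0 y yb ->
    decomp mul S0 (mul x y) (mul xb yb).
Proof.
  destruct HS0 as [[_ Hcomm] [[Hsub [Hab [HL HR]]] _]].
  destruct Horth as [Hreg Hband].
  intros x y a b [Ha [e [f [p [q [He [Hf [[Hp0 [Hpi HpR]] [[Hq0 [Hqi HqL]] [Hx [HeL HfR]]]]]]]]]]]
               [Hb [g [h [r [s [Hg [Hh [[Hr0 [Hri HrR]] [[Hs0 [Hsi HsL]] [Hy [HgL HhR]]]]]]]]]]].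
  assert (RA : forall u v X, mul u v = X -> forall Y, mul u (mul v Y) = mul X Y)
    by (intros; apply ctx; auto).
  pose proof (proj1 (HR _ _ Ha Hp0) HpR) as SpR.
  pose proof (proj1 (HL _ _ Ha Hq0) HqL) as SqL.
  pose proof (proj1 (HR _ _ Hb Hr0) HrR) as SrR.
  pose proof (proj1 (HL _ _ Hb Hs0) HsL) as SsL.
  assert (pa : mul p a = a) by (apply (rsNr _ _ _ _ _ SpR); exact Hpi).
  assert (aq : mul a q = a) by (apply (lsNr _ _ _ _ _ SqL); exact Hqi).
  assert (rb : mul r b = b) by (apply (rsNr _ _ _ _ _ SrR); exact Hri).
  assert (bs : mul b s = b) by (apply (lsNr _ _ _ _ _ SsL); exact Hsi).
  destruct (gL _ _ Hassoc _ _ He Hpi HeL) as [ep pe].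
  destruct (gR _ _ Hassoc _ _ Hf Hqi HfR) as [qf fq].
  destruct (gL _ _ Hassoc _ _ Hg Hri HgL) as [gr rg].
  destruct (gR _ _ Hassoc _ _ Hh Hsi HhR) as [sh hs].
  (* inverse k of a *)
  destruct (Hreg a) as [z Hz].
  assert (azp : mul (mul a z) p = p) by (apply (rsN _ _ _ _ _ SpR); exact Hz).
  assert (qza : mul q (mul z a) = q).
  { apply (lsN _ _ _ _ _ SqL). rewrite Hassoc. exact Hz. }
  set (k := mul q (mul z (mul a (mul z p)))).
  assert (ak : mul a k = p).
  { unfold k. rewrite (RA _ _ _ aq). rewrite Hassoc, Hassoc, Hz, Hassoc. exact azp. }
  assert (ka : mul k a = q).
  { unfold k. repeat rewrite <- Hassoc. rewrite pa. rewrite (Hassoc a z a), Hz. exact qza. }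
  assert (qk : mul q k = k) by (unfold k; rewrite Hassoc, Hqi; reflexivity).
  assert (kp : mul k p = k) by (unfold k; repeat rewrite <- Hassoc; rewrite Hpi; reflexivity).
  assert (ke : mul k e = k) by (rewrite <- kp, <- Hassoc, pe; reflexivity).
  destruct (Hreg b) as [z' Hz'].
  assert (bzr : mul (mul b z') r = r) by (apply (rsN _ _ _ _ _ SrR); exact Hz').
  assert (szb : mul s (mul z' b) = s).
  { apply (lsN _ _ _ _ _ SsL). rewrite Hassoc. exact Hz'. }
  set (k' := mul s (mul z' (mul b (mul z' r)))).
  assert (bk : mul b k' = r).
  { unfold k'. rewrite (RA _ _ _ bs). rewrite Hassoc, Hassoc, Hz', Hassoc. exact bzr. }
  assert (kb : mul k' b = s).
  { unfold k'. repeat rewrite <- Hassoc. rewrite rb. rewrite (Hassoc b z' b), Hz'. exact szb. }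
  assert (sk : mul s k' = k') by (unfold k'; rewrite Hassoc, Hsi; reflexivity).
  assert (kr : mul k' r = k') by (unfold k'; repeat rewrite <- Hassoc; rewrite Hri; reflexivity).
  assert (hk : mul h k' = k') by (rewrite <- sk, Hassoc, hs; reflexivity).
  clearbody k k'.
  assert (qr : mul q r = mul r q) by (apply Hcomm; auto).
  assert (fgI : mul f (mul g (mul f g)) = mul f g).
  { rewrite Hassoc. apply (Hband f g Hf Hg). }
  assert (gfI : mul g (mul f (mul g f)) = mul g f).
  { rewrite Hassoc. apply (Hband g f Hg Hf). }
  assert (gfY : forall Y, mul g (mul f (mul g (mul f Y))) = mul g (mul f Y)).
  { intros Y. repeat rewrite Hassoc. rewrite <- (Hassoc (mul g f) g f).
    rewrite (Hband g f Hg Hf). reflexivity. }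
  assert (fgY : forall Y, mul f (mul g (mul f (mul g Y))) = mul f (mul g Y)).
  { intros Y. repeat rewrite Hassoc. rewrite <- (Hassoc (mul f g) f g).
    rewrite (Hband f g Hf Hg). reflexivity. }
  assert (lem : mul r (mul f (mul g q)) = mul r q).
  { rewrite <- fq at 1. rewrite <- rg at 1. repeat rewrite <- Hassoc.
    rewrite gfY. rewrite (RA _ _ _ rg). rewrite fq. reflexivity. }
  assert (lemY : forall Y, mul r (mul f (mul g (mul q Y))) = mul r (mul q Y)).
  { intros Y. rewrite (Hassoc r q Y), <- lem. repeat rewrite <- Hassoc. reflexivity. }
  assert (Hab0 : S0 (mul a b)) by (apply Hsub; auto).
  destruct (Hab _ Hab0) as [[t [Ht0 [Hti HtR]]] [t' [Ht0' [Hti' HtL]]]].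
  pose proof (proj1 (HR _ _ Hab0 Ht0) HtR) as St.
  pose proof (proj1 (HL _ _ Hab0 Ht0') HtL) as St'.
  assert (tab : mul t (mul a b) = mul a b) by (apply (rsNr _ _ _ _ _ St); exact Hti).
  assert (abt : mul (mul a b) t' = mul a b) by (apply (lsNr _ _ _ _ _ St'); exact Hti').
  assert (tabY : forall Y, mul t (mul a (mul b Y)) = mul a (mul b Y)).
  { intros Y. rewrite (Hassoc a b Y), Hassoc, tab. reflexivity. }
  assert (abtY : forall Y, mul a (mul b (mul t' Y)) = mul a (mul b Y)).
  { intros Y. rewrite (Hassoc a b (mul t' Y)), (Hassoc (mul a b) t' Y), abt, <- Hassoc. reflexivity. }
  assert (abr : mul a (mul r b) = mul a b) by (rewrite rb; reflexivity).
  assert (aqrb : mul a (mul r (mul q b)) = mul a b).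
  { rewrite (Hassoc r q b), <- qr. repeat rewrite <- Hassoc. rewrite (RA _ _ _ aq). exact abr. }
  set (E := mul e (mul a (mul f (mul g k)))).
  set (m := mul a (mul r k)).
  assert (HE : idempotent mul E).
  { unfold idempotent, E. repeat rewrite <- Hassoc. rewrite (RA _ _ _ ke), (RA _ _ _ ka), (RA _ _ _ qf).
    rewrite fgY. reflexivity. }
  assert (Em : mul E m = E).
  { unfold E, m. repeat rewrite <- Hassoc. rewrite (RA _ _ _ ka), (RA _ _ _ qr).
    repeat rewrite <- Hassoc. rewrite (RA _ _ _ gr), qk. reflexivity. }
  assert (mE : mul m E = m).
  { unfold E, m. repeat rewrite <- Hassoc. rewrite (RA _ _ _ ke), (RA _ _ _ ka), (RA _ _ _ qf).
    rewrite <- qk at 1. rewrite lemY. rewrite (Hassoc r q k), <- qr. repeat rewrite <- Hassoc.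
    rewrite (RA _ _ _ aq). reflexivity. }
  assert (mb : mul (mul a b) (mul k' k) = m).
  { unfold m. repeat rewrite <- Hassoc. rewrite (RA _ _ _ bk). reflexivity. }
  assert (tm : mul t m = m) by (rewrite <- mb, Hassoc, tab; reflexivity).
  assert (mt : mul m t = t).
  { apply (rsN _ _ _ _ _ St). unfold m. repeat rewrite <- Hassoc. rewrite (RA _ _ _ ka). exact aqrb. }
  assert (tEt : mul t (mul E t) = t).
  { rewrite <- mt at 1. rewrite <- mE at 1. repeat rewrite <- Hassoc.
    rewrite (Hassoc E t (mul E t)), (Hband E t HE Hti), Hassoc, mE, mt. reflexivity. }
  set (F := mul k' (mul f (mul g (mul b h)))).
  set (m' := mul k' (mul q b)).
  assert (HF : idempotent mul F).
  { unfold idempotent, F. repeat rewrite <- Hassoc. rewrite (RA _ _ _ hk), (RA _ _ _ bk), (RA _ _ _ gr).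
    rewrite fgY. reflexivity. }
  assert (mF : mul m' F = F).
  { unfold F, m'. repeat rewrite <- Hassoc. rewrite (RA _ _ _ bk), (RA _ _ _ qr).
    repeat rewrite <- Hassoc. rewrite (RA _ _ _ qf), (RA _ _ _ kr). reflexivity. }
  assert (Fm : mul F m' = m').
  { unfold F, m'. repeat rewrite <- Hassoc. rewrite (RA _ _ _ hk), (RA _ _ _ bk), (RA _ _ _ gr).
    rewrite <- kr at 1. repeat rewrite <- Hassoc. rewrite lemY, (RA _ _ _ kr). reflexivity. }
  assert (mb' : mul (mul k' k) (mul a b) = m').
  { unfold m'. repeat rewrite <- Hassoc. rewrite (RA _ _ _ ka). reflexivity. }
  assert (mt' : mul m' t' = m') by (rewrite <- mb', <- Hassoc, abt; reflexivity).
  assert (tm' : mul t' m' = t').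
  { apply (lsN _ _ _ _ _ St'). unfold m'. repeat rewrite <- Hassoc. rewrite (RA _ _ _ bk). exact aqrb. }
  assert (tFt : mul t' (mul F t') = t').
  { rewrite <- tm' at 2. rewrite <- Fm at 1. repeat rewrite Hassoc.
    rewrite <- (Hassoc (mul t' F) t' F), (Hband t' F Hti' HF), <- Hassoc, Fm, tm'. reflexivity. }
  split; [exact Hab0|].
  exists (mul E t), (mul t' F), t, t'.
  split; [unfold idempotent; rewrite <- Hassoc, tEt; reflexivity|].
  split; [unfold idempotent; rewrite Hassoc, <- (Hassoc t' F t'), tFt; reflexivity|].
  split; [split; [exact Ht0| split; assumption]|].
  split; [split; [exact Ht0'| split; assumption]|].
  split.
  { rewrite Hx, Hy. unfold E, F. repeat rewrite <- Hassoc.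
    rewrite tabY, abtY, (RA _ _ _ ka), (RA _ _ _ bk), (RA _ _ _ qr).
    repeat rewrite <- Hassoc. rewrite (RA _ _ _ gr), (RA _ _ _ qf), fgY. reflexivity. }
  split.
  { exists (Some (mul E t)), (Some t). simpl. split.
    - rewrite <- Hassoc, Hti. reflexivity.
    - symmetry. exact tEt. }
  { exists (Some (mul t' F)), (Some t'). simpl. split.
    - rewrite Hassoc, Hti'. reflexivity.
    - rewrite <- Hassoc. symmetry. exact tFt. }
Qed.
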